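(* Let $G$ be a finitely generated group containing a finite index subgroup isomorphic to $\mathbb{Z}$. Then for every finite generating set $S$ of $G$, the metric space $(G,d_S)$ admits a bilipschitz embedding into $\mathbb{R}$.
   Context: $d_S$ is the word metric, i.e. the shortest path distance on the vertex set $G$ of the Cayley graph $\mathrm{Cay}(G,S)$ (the Cayley graph is regarded as the set of group elements, not as a 1-dimensional complex). A bilipschitz embedding is a map $f$ with $c\,d(u,v)\le |f(u)-f(v)|\le C\,d(u,v)$ for constants $0<c\le C<\infty$. *)

(* Defs.v *)
From Stdlib Require Import Reals ZArith List.
Import ListNotations.
Open Scope R_scope.

Record Grp := {
  carrier :> Type;
  gmul : carrier -> carrier -> carrier;
  gone : carrier;
  ginv : carrier -> carrier;
  gmul_assoc : forall x y z, gmul x (gmul y z) = gmul (gmul x y) z;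
  gmul_1l : forall x, gmul gone x = x;
  gmul_Vl : forall x, gmul (ginv x) x = gone
}.

Arguments gmul {g}.
Arguments gone {g}.
Arguments ginv {g}.

(* A letter is a generator s together with a sign: (s,true) = s, (s,false) = s^-1. *)
Definition letter_val {G : Grp} (l : G * bool) : G :=
  if snd l then fst l else ginv (fst l).

Definition word_eval {G : Grp} (w : list (G * bool)) : G :=
  fold_right (fun l acc => gmul (letter_val l) acc) gone w.

Definition word_over {G : Grp} (S : list G) (w : list (G * bool)) : Prop :=
  Forall (fun l => In (fst l) S) w.

Definition generates {G : Grp} (S : list G) : Prop :=
  forall g : G, exists w, word_over S w /\ word_eval w = g.

Definition finitely_generated (G : Grp) : Prop :=
  exists S : list G, generates S.

(* word_dist S u v n : the word-metric distance d_S(u,v) (distance in the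
   Cayley graph Cay(G,S), edges g -- g s^{±1}) equals n, i.e. n is the
   minimal length of a word w over S ∪ S^{-1} with u * w = v. *)
Definition word_dist {G : Grp} (S : list G) (u v : G) (n : nat) : Prop :=
  (exists w, word_over S w /\ length w = n /\ gmul u (word_eval w) = v) /\
  (forall w, word_over S w -> gmul u (word_eval w) = v -> (n <= length w)%nat).

(* G contains a finite-index subgroup isomorphic to Z: an injective
   homomorphism phi : Z -> G whose image has finitely many left cosets
   (represented by a finite list of coset representatives). *)
Definition virtually_Z (G : Grp) : Prop :=
  exists phi : Z -> G,
    (forall a b : Z, phi (a + b)%Z = gmul (phi a) (phi b)) /\
    (forall a b : Z, phi a = phi b -> a = b) /\
    (exists reps : list G, forall g : G,
        exists r n, In r reps /\ g = gmul r (phi n)).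

Definition bilipschitz_into_R {G : Grp} (S : list G) (f : G -> R) : Prop :=
  exists c C : R, 0 < c /\ c <= C /\
    forall (u v : G) (n : nat), word_dist S u v n ->
      c * INR n <= Rabs (f u - f v) <= C * INR n.

(* Main.v *)
Require Import Defs.
From Stdlib Require Import Reals ZArith List Lia Lra Classical ClassicalEpsilon.
Import ListNotations.

Lemma gmul_Vr (G:Grp) (x:G) : gmul x (ginv x) = gone.
Proof.
  assert (Hyy : gmul (gmul x (ginv x)) (gmul x (ginv x)) = gmul x (ginv x)).
  { rewrite <- gmul_assoc. rewrite (gmul_assoc _ (ginv x) x (ginv x)), gmul_Vl, gmul_1l. reflexivity. }
  set (y := gmul x (ginv x)) in *.
  transitivity (gmul (gmul (ginv y) y) y). { rewrite gmul_Vl, gmul_1l. reflexivity. }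
  rewrite <- gmul_assoc, Hyy. apply gmul_Vl.
Qed.

Lemma gmul_1r (G:Grp) (x:G) : gmul x gone = x.
Proof. rewrite <- (gmul_Vl _ x), gmul_assoc, gmul_Vr, gmul_1l. reflexivity. Qed.

Lemma inv_unique (G:Grp) (a b:G) : gmul a b = gone -> b = ginv a.
Proof. intro H. rewrite <- (gmul_1l _ b), <- (gmul_Vl _ a), <- gmul_assoc, H, gmul_1r. reflexivity. Qed.

Lemma ginv_mul (G:Grp) (a b:G) : ginv (gmul a b) = gmul (ginv b) (ginv a).
Proof. symmetry. apply inv_unique. rewrite <- gmul_assoc, (gmul_assoc _ b), gmul_Vr, gmul_1l, gmul_Vr. reflexivity. Qed.

Lemma ginv_inv (G:Grp) (a:G) : ginv (ginv a) = a.
Proof. symmetry. apply inv_unique. apply gmul_Vl. Qed.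

Lemma phi0 (G:Grp) (phi : Z -> G) (Hhom : forall a b, phi (a+b)%Z = gmul (phi a) (phi b)) : phi 0%Z = gone.
Proof.
  assert (H : gmul (phi 0%Z) (phi 0%Z) = gmul (phi 0%Z) gone) by (rewrite <- Hhom, gmul_1r; reflexivity).
  apply (f_equal (gmul (ginv (phi 0%Z)))) in H. rewrite !gmul_assoc, gmul_Vl, !gmul_1l in H. exact H.
Qed.

Lemma phi_opp (G:Grp) (phi : Z -> G) (Hhom : forall a b, phi (a+b)%Z = gmul (phi a) (phi b)) a : phi (-a)%Z = ginv (phi a).
Proof. apply inv_unique. rewrite <- Hhom, Z.add_opp_diag_r. apply phi0; auto. Qed.

Lemma choice_lemma (A B : Type) (P : A -> B -> Prop) : (forall a, exists b, P a b) -> exists f, forall a, P a (f a).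
Proof.
  intro H. exists (fun a => proj1_sig (constructive_indefinite_description _ (H a))).
  intro a. exact (proj2_sig (constructive_indefinite_description _ (H a))).
Qed.

Lemma preim_bound (G:Grp) (phi : Z -> G) (Hinj : forall a b, phi a = phi b -> a = b) (Y : list G) :
  exists B, (0 <= B)%Z /\ forall k, In (phi k) Y -> (Z.abs k <= B)%Z.
Proof.
  induction Y as [|y Y IH].
  - exists 0%Z; split; [lia| intros k []].
  - destruct IH as [B [HB HY]].
    destruct (classic (exists k0, phi k0 = y)) as [[k0 Hk0]|Hn].
    + exists (Z.max B (Z.abs k0)); split; [lia|].
      intros k [Hk|Hk].
      * rewrite <- Hk0 in Hk. apply Hinj in Hk. subst. lia.
      * specialize (HY k Hk). lia.
    + exists B; split; auto. intros k [Hk|Hk]; [exfalso; apply Hn; eauto | auto].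
Qed.

Lemma words_bound (G:Grp) (S : list G) (HS : generates S) (X : list G) :
  exists L, (1 <= L)%nat /\ forall x, In x X -> exists w, word_over S w /\ (length w <= L)%nat /\ word_eval w = x.
Proof.
  induction X as [|x X IH].
  - exists 1%nat; split; [lia| intros x []].
  - destruct IH as [L [HL HX]]. destruct (HS x) as [w [Hw Hwe]].
    exists (Nat.max L (length w)); split; [lia|].
    intros y [<-|Hy].
    + exists w; repeat split; auto; lia.
    + destruct (HX y Hy) as [w' [? [? ?]]]. exists w'; repeat split; auto; lia.
Qed.

Lemma eval_cons (G:Grp) l (w : list (G*bool)) : word_eval (l :: w) = gmul (letter_val l) (word_eval w).
Proof. reflexivity. Qed.

Lemma eval_app (G:Grp) (w1 w2 : list (G*bool)) : word_eval (w1 ++ w2) = gmul (word_eval w1) (word_eval w2).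
Proof.
  induction w1 as [|l w1 IH].
  - simpl app. change (word_eval []) with (@gone G). now rewrite gmul_1l.
  - rewrite <- app_comm_cons, !eval_cons, IH. apply gmul_assoc.
Qed.

Lemma pow_word (G:Grp) (S:list G) (phi : Z -> G) (Hhom : forall a b, phi (a+b)%Z = gmul (phi a) (phi b)) (a:Z) (L:nat) (wa : list (G*bool)) :
  word_over S wa -> (length wa <= L)%nat -> word_eval wa = phi a ->
  forall m:nat, exists w, word_over S w /\ (length w <= L*m)%nat /\ word_eval w = phi (a * Z.of_nat m)%Z.
Proof.
  intros Hwa Hl He m. induction m as [|m IH].
  - exists []; repeat split; [constructor| simpl; lia| ]. rewrite Z.mul_0_r. symmetry; apply phi0; auto.
  - destruct IH as [w [Hw [Hlw Hew]]]. exists (wa ++ w). split; [apply Forall_app; auto|split].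
    + rewrite length_app; nia.
    + rewrite eval_app, He, Hew, <- Hhom. f_equal. lia.
Qed.

Lemma z_word (G:Grp) (S:list G) (phi : Z -> G) (Hhom : forall a b, phi (a+b)%Z = gmul (phi a) (phi b)) (L:nat) :
  (exists w, word_over S w /\ (length w <= L)%nat /\ word_eval w = phi 1%Z) ->
  (exists w, word_over S w /\ (length w <= L)%nat /\ word_eval w = phi (-1)%Z) ->
  forall k, exists w, word_over S w /\ (Z.of_nat (length w) <= Z.of_nat L * Z.abs k)%Z /\ word_eval w = phi k.
Proof.
  intros [w1 [H1 [H1l H1e]]] [w2 [H2 [H2l H2e]]] k.
  destruct (Z_le_gt_dec 0 k).
  - destruct (pow_word G S phi Hhom _ _ _ H1 H1l H1e (Z.abs_nat k)) as [w [? [? ?]]].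
    exists w; repeat split; auto. nia. rewrite H3. f_equal. lia.
  - destruct (pow_word G S phi Hhom _ _ _ H2 H2l H2e (Z.abs_nat k)) as [w [? [? ?]]].
    exists w; repeat split; auto. nia. rewrite H3. f_equal. lia.
Qed.
Theorem propositionP (G : Grp) (Hfg : finitely_generated G)
  (HvZ : virtually_Z G) :
  forall S : list G, generates S ->
    exists f : G -> R, bilipschitz_into_R S f.
Proof.
  intros S HS.
  destruct HvZ as [phi [Hhom [Hinj [reps Hreps]]]].
  set (T := map ginv reps).
  assert (Hdec : forall g:G, exists p : Z * nat, (snd p < length T)%nat /\ g = gmul (phi (fst p)) (nth (snd p) T gone)).
  { intro g. destruct (Hreps (ginv g)) as [r [m [Hr Hg]]].
    assert (HT : In (ginv r) T) by (apply in_map; auto).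
    destruct (In_nth T (ginv r) gone HT) as [i [Hi Hni]].
    exists ((-m)%Z, i); simpl; split; auto.
    rewrite Hni, phi_opp by auto.
    rewrite <- ginv_mul, <- Hg, ginv_inv. reflexivity. }
  destruct (choice_lemma _ _ _ Hdec) as [dec Hspec].
  set (K := Z.of_nat (length T)).
  set (F := fun g => (K * fst (dec g) + Z.of_nat (snd (dec g)))%Z).
  assert (HF1 : forall u v, u <> v -> (1 <= Z.abs (F u - F v))%Z /\
                  (Z.abs (fst (dec u) - fst (dec v)) <= Z.abs (F u - F v))%Z).
  { intros u v Huv. destruct (Hspec u) as [Hu1 Hu2]. destruct (Hspec v) as [Hv1 Hv2].
    unfold F. destruct (dec u) as [n i]. destruct (dec v) as [n' i']. simpl in *.
    assert (Hi : (Z.of_nat i < K)%Z) by lia. assert (Hi' : (Z.of_nat i' < K)%Z) by lia.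
    destruct (Z.eq_dec n n') as [<-|Hn].
    - assert (i <> i') by (intro; subst; congruence). lia.
    - assert (Hd : (n - n' >= 1 \/ n - n' <= -1)%Z) by lia.
      assert (Heq : (K * n + Z.of_nat i - (K * n' + Z.of_nat i') = K * (n - n') + (Z.of_nat i - Z.of_nat i'))%Z) by ring.
      rewrite Heq. set (d := (n - n')%Z) in *.
      destruct Hd.
      + assert ((K - 1) * (d - 1) = K * d - K - d + 1)%Z by ring.
        assert (0 <= (K - 1) * (d - 1))%Z by (apply Z.mul_nonneg_nonneg; lia). lia.
      + assert ((K - 1) * (- d - 1) = - (K * d) - K + d + 1)%Z by ring.
        assert (0 <= (K - 1) * (- d - 1))%Z by (apply Z.mul_nonneg_nonneg; lia). lia. }
  set (Y1 := flat_map (fun t => flat_map (fun t' => flat_map (fun s =>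
               [gmul t' (gmul (ginv s) (ginv t)); gmul t' (gmul (ginv (ginv s)) (ginv t))]) S) T) T).
  destruct (preim_bound G phi Hinj Y1) as [B [HB0 HB]].
  assert (HS1 : forall g l, In (fst l) S ->
            (Z.abs (fst (dec g) - fst (dec (gmul g (letter_val l)))) <= B)%Z).
  { intros g l Hl. apply HB.
    destruct (Hspec g) as [Hg1 Hg2]. destruct (Hspec (gmul g (letter_val l))) as [Hh1 Hh2].
    set (t := nth (snd (dec g)) T gone) in *. set (t' := nth (snd (dec (gmul g (letter_val l)))) T gone) in *.
    assert (Ht : In t T) by (apply nth_In; auto). assert (Ht' : In t' T) by (apply nth_In; auto).
    set (n := fst (dec g)) in *. set (n' := fst (dec (gmul g (letter_val l)))) in *.
    assert (He : phi (n - n')%Z = gmul t' (gmul (ginv (letter_val l)) (ginv t))).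
    { assert (E : gmul (phi (n - n')%Z) (gmul t (letter_val l)) = t').
      { replace (n - n')%Z with (-n' + n)%Z by lia. rewrite Hhom, <- gmul_assoc, (gmul_assoc _ (phi n)), <- Hg2.
        rewrite Hh2, phi_opp, gmul_assoc, gmul_Vl, gmul_1l; auto. }
      rewrite <- E, <- ginv_mul, <- gmul_assoc, gmul_Vr, gmul_1r. reflexivity. }
    rewrite He. unfold Y1. apply in_flat_map. exists t; split; auto.
    apply in_flat_map. exists t'; split; auto. apply in_flat_map. exists (fst l); split; auto.
    destruct l as [s [|]]; unfold letter_val; simpl; auto. }
  set (M := (K * B + K)%Z).
  assert (HK : (0 <= K)%Z) by lia.
  assert (Hwalk : forall w, word_over S w -> forall u,
            (Z.abs (F u - F (gmul u (word_eval w))) <= M * Z.of_nat (length w))%Z).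
  { induction w as [|l w IH]; intros Hw u.
    - change (word_eval []) with (@gone G). rewrite gmul_1r. simpl. lia.
    - inversion Hw as [|? ? Hl Hw']; subst.
      rewrite eval_cons, gmul_assoc.
      specialize (IH Hw' (gmul u (letter_val l))).
      specialize (HS1 u l Hl).
      destruct (Hspec u) as [Hu1 _]. destruct (Hspec (gmul u (letter_val l))) as [Hv1 _].
      assert (Hstep : (Z.abs (F u - F (gmul u (letter_val l))) <= M)%Z).
      { unfold F, M. set (a := fst (dec u)) in *. set (b := fst (dec (gmul u (letter_val l)))) in *.
        assert (Hm : (Z.abs (K * a - K * b) <= K * B)%Z).
        { rewrite <- Z.mul_sub_distr_l, Z.abs_mul, (Z.abs_eq K) by lia. apply Z.mul_le_mono_nonneg_l; lia. }
        lia. }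
      simpl length. rewrite Nat2Z.inj_succ. lia. }
  destruct (words_bound G S HS (map ginv T ++ T ++ [phi 1%Z; phi (-1)%Z])) as [L [HL1 HL]].
  assert (HZ := z_word G S phi Hhom L
            (HL (phi 1%Z) ltac:(apply in_app_iff; right; apply in_app_iff; right; simpl; auto))
            (HL (phi (-1)%Z) ltac:(apply in_app_iff; right; apply in_app_iff; right; simpl; auto))).
  assert (Hlow : forall u v, exists w, word_over S w /\ gmul u (word_eval w) = v /\
            (Z.of_nat (length w) <= Z.of_nat L * Z.abs (fst (dec u) - fst (dec v)) + 2 * Z.of_nat L)%Z).
  { intros u v. destruct (Hspec u) as [Hu1 Hu2]. destruct (Hspec v) as [Hv1 Hv2].
    set (t := nth (snd (dec u)) T gone) in *. set (t' := nth (snd (dec v)) T gone) in *.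
    assert (Ht : In t T) by (apply nth_In; auto). assert (Ht' : In t' T) by (apply nth_In; auto).
    set (n := fst (dec u)) in *. set (n' := fst (dec v)) in *.
    destruct (HL (ginv t) ltac:(apply in_app_iff; left; apply in_map; auto)) as [w1 [Hw1 [Hl1 He1]]].
    destruct (HL t' ltac:(apply in_app_iff; right; apply in_app_iff; left; auto)) as [w3 [Hw3 [Hl3 He3]]].
    destruct (HZ (n' - n)%Z) as [w2 [Hw2 [Hl2 He2]]].
    exists (w1 ++ w2 ++ w3). split; [apply Forall_app; split; [auto|apply Forall_app; split; auto]|split].
    - rewrite !eval_app, He1, He2, He3. rewrite Hu2, Hv2.
      rewrite <- !gmul_assoc, (gmul_assoc _ t), gmul_Vr, gmul_1l, gmul_assoc, <- Hhom.
      f_equal. f_equal. lia.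
    - rewrite !length_app. replace (Z.abs (n' - n)) with (Z.abs (n - n')) in Hl2 by lia. lia. }
  exists (fun g => IZR (F g)).
  exists (/ IZR (3 * Z.of_nat L)), (IZR (M + 1)).
  assert (HL3 : (0 < IZR (3 * Z.of_nat L))%R) by (apply IZR_lt; lia).
  assert (HM1 : (1 <= IZR (M + 1))%R) by (apply IZR_le; unfold M; assert (0 <= K * B)%Z by (apply Z.mul_nonneg_nonneg; lia); lia).
  split; [apply Rinv_0_lt_compat; auto|split].
  { apply Rle_trans with 1%R; auto.
    rewrite <- Rinv_1. apply Rinv_le_contravar; [lra|]. apply IZR_le; lia. }
  intros u v D [[w0 [Hw0 [Hl0 He0]]] Hmin].
  rewrite INR_IZR_INZ, <- minus_IZR, <- abs_IZR.
  split.
  - destruct (classic (u = v)) as [<-|Huv].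
    + assert (D = 0)%nat by (specialize (Hmin [] (Forall_nil _)); simpl in Hmin;
        change (word_eval []) with (@gone G) in Hmin; rewrite gmul_1r in Hmin; specialize (Hmin eq_refl); lia).
      subst D. apply Rle_trans with 0%R; [right; rewrite H; apply Rmult_0_r | apply IZR_le; lia].
    + destruct (Hlow u v) as [w [Hw [Hwe Hwl]]].
      specialize (Hmin w Hw Hwe). destruct (HF1 u v Huv) as [H1 H2].
      assert (HD : (Z.of_nat D <= 3 * Z.of_nat L * Z.abs (F u - F v))%Z).
      { assert (Z.of_nat L * Z.abs (fst (dec u) - fst (dec v)) <= Z.of_nat L * Z.abs (F u - F v))%Z by (apply Z.mul_le_mono_nonneg_l; lia).
        assert (Z.of_nat L * 1 <= Z.of_nat L * Z.abs (F u - F v))%Z by (apply Z.mul_le_mono_nonneg_l; lia).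
        assert (3 * Z.of_nat L * Z.abs (F u - F v) = 3 * (Z.of_nat L * Z.abs (F u - F v)))%Z by ring.
        lia. }
      apply IZR_le in HD. rewrite mult_IZR in HD.
      apply Rmult_le_reg_l with (IZR (3 * Z.of_nat L)); auto.
      rewrite <- Rmult_assoc, Rinv_r by lra. lra.
  - rewrite <- mult_IZR. apply IZR_le.
    rewrite <- He0. specialize (Hwalk w0 Hw0 u). rewrite Hl0 in Hwalk.
    assert ((M + 1) * Z.of_nat D = M * Z.of_nat D + Z.of_nat D)%Z by ring. lia.
Qed.
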